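(* Let $q$ be a self-join-free Boolean conjunctive query, let $q_0\subseteq q$, let $\mathbf{db}$ be a database, and let $\mathbf{o}$ be a garbage set for $q_0$ in $\mathbf{db}$. If $\mathbf{p}$ is the union of one or more blocks of $\mathbf{o}$, then $\mathbf{o}\setminus\mathbf{p}$ is a garbage set for $q_0$ in $\mathbf{db}\setminus\mathbf{p}$.
   Context: Every relation name has a signature $[n,k]$ ($1\le k\le n$; primary-key positions $1,\dots,k$) and a mode in $\{\mathsf{c},\mathsf{i}\}$. Facts are variable-free atoms; facts are key-equal if same relation name and same primary-key values. A database is a finite set of facts with no two distinct key-equal facts of mode $\mathsf{c}$, all of whose relation names occur in $q$. A block of a set of facts is a maximal subset of pairwise key-equal facts; the block of $A$ in $\mathbf{db}$ is the set of facts of $\mathbf{db}$ key-equal to $A$. A repair of a set of facts is a maximal subset without two distinct key-equal facts. A self-join-free Boolean conjunctive query is a finite set of atoms with distinct relation names; for a fact $A$, $\mathrm{atom}(A)$ is the atom of $q$ with the same relation name. A subset $\mathbf{o}\subseteq\mathbf{db}$ is a garbage set for $q_0$ in $\mathbf{db}$ if (1) for every $A\in\mathbf{o}$, $\mathrm{atom}(A)\in q_0$ and the block of $A$ in $\mathbf{db}$ is included in $\mathbf{o}$; and (2) there is a repair $\mathbf{r}$ of $\mathbf{o}$ such that for every valuation $\theta$ of the variables of $q$, if $\theta(q)\subseteq(\mathbf{db}\setminus\mathbf{o})\cup\mathbf{r}$ then $\theta(q_0)\cap\mathbf{r}=\emptyset$. *)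

(* Defs.v *)
From Stdlib Require Import List Arith.
Import ListNotations.
Set Implicit Arguments.

Inductive Mode : Type := ModeC | ModeI.

Record Schema : Type := {
  RName : Type;
  arity : RName -> nat;
  keylen : RName -> nat;         (* k: primary-key positions 1..k *)
  mode : RName -> Mode;
  keylen_pos : forall R, 1 <= keylen R;
  keylen_le : forall R, keylen R <= arity R
}.
Arguments arity {_}. Arguments keylen {_}. Arguments mode {_}.

Section Defs.
Variable S : Schema.
Variables Const Var : Type.

Inductive Term : Type := TVar (v : Var) | TConst (c : Const).

Record Atom : Type := mkAtom { arel : RName S; aargs : list Term }.
Record Fact : Type := mkFact { frel : RName S; fargs : list Const }.

Definition wf_atom (F : Atom) : Prop := length (aargs F) = arity (arel F).
Definition wf_fact (A : Fact) : Prop := length (fargs A) = arity (frel A).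

Definition key_equal (A B : Fact) : Prop :=
  frel A = frel B /\
  firstn (keylen (frel A)) (fargs A) = firstn (keylen (frel B)) (fargs B).

Definition fset := Fact -> Prop.
Definition subset (X Y : fset) : Prop := forall A, X A -> Y A.
Definition setminus (X Y : fset) : fset := fun A => X A /\ ~ Y A.
Definition setunion (X Y : fset) : fset := fun A => X A \/ Y A.
Definition finite_set (X : fset) : Prop := exists l : list Fact, forall A, X A <-> In A l.

Definition sjf_query (q : list Atom) : Prop :=
  NoDup (map (@arel) q) /\ Forall wf_atom q.

Definition database (q : list Atom) (db : fset) : Prop :=
  finite_set db /\
  (forall A, db A -> wf_fact A) /\
  (forall A B, db A -> db B -> key_equal A B -> mode (frel A) = ModeC -> A = B) /\
  (forall A, db A -> exists F, In F q /\ arel F = frel A).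

Definition block_in (db : fset) (A : Fact) : fset := fun B => db B /\ key_equal A B.

Definition pairwise_key_equal (X : fset) : Prop :=
  forall A B, X A -> X B -> key_equal A B.

Definition is_block (X B : fset) : Prop :=
  subset B X /\ pairwise_key_equal B /\
  forall B', subset B B' -> subset B' X -> pairwise_key_equal B' -> subset B' B.

Definition union_of_blocks (X p : fset) : Prop :=
  exists bs : list fset, bs <> [] /\ Forall (is_block X) bs /\
    forall A, p A <-> exists B, In B bs /\ B A.

Definition consistent (X : fset) : Prop :=
  forall A B, X A -> X B -> key_equal A B -> A = B.

Definition is_repair (X r : fset) : Prop :=
  subset r X /\ consistent r /\
  forall r', subset r r' -> subset r' X -> consistent r' -> subset r' r.

Definition subst_term (theta : Var -> Const) (t : Term) : Const :=
  match t with TVar v => theta v | TConst c => c end.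
Definition subst_atom (theta : Var -> Const) (F : Atom) : Fact :=
  mkFact (arel F) (map (subst_term theta) (aargs F)).

Definition val_incl (theta : Var -> Const) (q : list Atom) (X : fset) : Prop :=
  forall F, In F q -> X (subst_atom theta F).

Definition atom_in (q q0 : list Atom) (A : Fact) : Prop :=
  exists F, In F q /\ arel F = frel A /\ In F q0.

Definition garbage_set (q q0 : list Atom) (db o : fset) : Prop :=
  subset o db /\
  (forall A, o A -> atom_in q q0 A /\ subset (block_in db A) o) /\
  exists r, is_repair o r /\
    forall theta : Var -> Const,
      val_incl theta q (setunion (setminus db o) r) ->
      forall F, In F q0 -> ~ r (subst_atom theta F).

End Defs.

(* Main.v *)
Require Import Defs.
From Stdlib Require Import List Classical.

Lemma ke_sym (S : Schema) (Const : Type) (A B : Fact S Const) :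
  key_equal A B -> key_equal B A.
Proof. intros [H1 H2]. split; auto. Qed.

Lemma ke_trans (S : Schema) (Const : Type) (A B C : Fact S Const) :
  key_equal A B -> key_equal B C -> key_equal A C.
Proof. intros [H1 H2] [H3 H4]. split; congruence. Qed.

Lemma block_closed (S : Schema) (Const : Type) (o Bk : fset S Const) A C :
  is_block o Bk -> Bk A -> o C -> key_equal A C -> Bk C.
Proof.
  intros [Hs [Hp Hm]] HA HC Hk.
  apply (Hm (fun X => Bk X \/ X = C)).
  - intros X HX; now left.
  - intros X [HX|HX]; [now apply Hs|now subst].
  - intros X Y [HX|HX] [HY|HY]; subst.
    + now apply Hp.
    + eapply ke_trans; [apply (Hp X A HX HA)|exact Hk].
    + eapply ke_trans; [apply ke_sym, Hk|apply (Hp A Y HA HY)].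
    + split; reflexivity.
  - now right.
Qed.

Theorem lemma30 (S : Schema) (Const Var : Type)
  (q q0 : list (Atom S Const Var)) (db o p : fset S Const) :
  sjf_query q ->
  incl q0 q ->
  database q db ->
  garbage_set q q0 db o ->
  union_of_blocks o p ->
  garbage_set q q0 (setminus db p) (setminus o p).
Proof.
  intros _ _ _ [Hodb [Hblk [r [[Hro [Hrc Hrm]] Hth]]]] [bs [_ [Hbs Hp]]].
  assert (Pcl : forall A C, p A -> o C -> key_equal A C -> p C).
  { intros A C HA HC Hk. apply Hp in HA. destruct HA as [Bk [HIn HBA]].
    apply Hp. exists Bk. split; auto.
    rewrite Forall_forall in Hbs.
    eapply block_closed; eauto. }
  split; [|split].
  - intros A [H1 H2]. split; auto.
  - intros A [HA HnA]. destruct (Hblk A HA) as [Hat Hsub]. split; auto.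
    intros B [[HB HBp] Hk]. split; auto. apply Hsub. split; auto.
  - exists (setminus r p). split; [split; [|split]|].
    + intros A [H1 H2]. split; auto.
    + intros A B [HA _] [HB _]. now apply Hrc.
    + intros r'' Hsub Hsub2 Hc A HA.
      assert (HAr : r A).
      { apply (Hrm (fun X => r'' X \/ (r X /\ p X))).
        - intros X HX. destruct (classic (p X)); [right; auto|left; apply Hsub; split; auto].
        - intros X [HX|[HX _]]; [apply Hsub2 in HX; apply HX|now apply Hro].
        - intros X Y [HX|[HX HXp]] [HY|[HY HYp]] Hk.
          + now apply Hc.
          + exfalso. destruct (Hsub2 X HX) as [HXo HXn]. apply HXn.
            eapply Pcl; [exact HYp|exact HXo|now apply ke_sym].
          + exfalso. destruct (Hsub2 Y HY) as [HYo HYn]. apply HYn.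
            eapply Pcl; [exact HXp|exact HYo|exact Hk].
          + now apply Hrc.
        - now left. }
      split; auto. apply (Hsub2 A HA).
    + intros theta Hv F HF [HrF HpF].
      refine (Hth theta _ F HF HrF).
      intros G HG. destruct (Hv G HG) as [[[Hd Hnp] Hno]|[Hr Hnp]].
      * left. split; auto. intro Ho. apply Hno. split; auto.
      * right; auto.
Qed.
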